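(* Let $n\in\mathbb{N}_0$ and for $z,w\in\mathbb{C}$ with $z\neq w$ define $$H_n(z,w)=\frac{|z|^{2n}}{|z-w|^{2n}}e^{-\pi(|z|^2-|z-w|^2)}.$$ Let $R>0$, $w=R/2$, and $z=re^{i\varphi}$ with $r\ge R$ and $|\varphi|\le\pi/5$. Then $$H_n(z,w)\le 4^n e^{-\pi R^2/2}.$$
   Context: For $n=0$ the factor $|z|^{2n}/|z-w|^{2n}$ equals $1$. *)

(* Defs.v *)
From Stdlib Require Import Reals.
From Coquelicot Require Import Coquelicot.
Open Scope R_scope.

Definition H (n : nat) (z w : C) : R :=
  (Cmod z) ^ (2 * n) / (Cmod (Cminus z w)) ^ (2 * n)
  * exp (- PI * ((Cmod z) ^ 2 - (Cmod (Cminus z w)) ^ 2)).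

(* Main.v *)
Require Import Defs.
From Stdlib Require Import Reals Lra.
From Coquelicot Require Import Coquelicot.
Open Scope R_scope.
Lemma PI_ub : PI <= 52/15.
Proof.
  pose proof (Alt_PI_ineq 1) as [_ H]. rewrite Alt_PI_eq in H.
  simpl in H. unfold tg_alt, PI_tg in H. simpl in H. lra.
Qed.
Lemma cos_lb (phi : R) : Rabs phi <= PI/5 -> 3/4 < cos phi.
Proof.
  intros Hp. pose proof PI_ub. pose proof PI_RGT_0.
  pose proof (Rle_abs phi). pose proof (Rle_abs (-phi)). rewrite Rabs_Ropp in *.
  destruct (cos_bound phi 0) as [Hc _]; try lra.
  unfold cos_approx in Hc. simpl in Hc. unfold cos_term in Hc. simpl in Hc.
  nra.
Qed.

Theorem lemma2 (n : nat) (R0 r phi : R) :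
  0 < R0 -> R0 <= r -> Rabs phi <= PI / 5 ->
  let z : C := Cmult (RtoC r) (cos phi, sin phi) in
  let w : C := RtoC (R0 / 2) in
  H n z w <= 4 ^ n * exp (- PI * R0 ^ 2 / 2).
Proof.
  intros HR Hr Hp z w.
  pose proof (cos_lb phi Hp) as Hc.
  pose proof (sin2_cos2 phi) as Hsc. unfold Rsqr in Hsc.
  pose proof (COS_bound phi) as [_ Hc1].
  assert (Ea : Cmod z ^ 2 = r ^ 2).
  { rewrite Cmod2_alt. unfold z, RtoC. simpl. nra. }
  assert (Eb : Cmod (Cminus z w) ^ 2 = r^2 - r*R0*cos phi + R0^2/4).
  { rewrite Cmod2_alt. unfold z, w, RtoC. simpl. transitivity (r*r*(sin phi * sin phi + cos phi * cos phi) - r*R0*cos phi + R0*R0/4); [field|rewrite Hsc; field]. }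
  unfold H. rewrite !pow_mult, Ea, Eb.
  assert (Hb : r^2/4 <= r^2 - r*R0*cos phi + R0^2/4).
  { assert (0 <= r*R0*(1 - cos phi)) by (apply Rmult_le_pos; nra).
    assert (0 <= (3*r-R0)*(r-R0)) by (apply Rmult_le_pos; lra). nra. }
  assert (Hb0 : 0 < r^2/4) by nra.
  unfold Rdiv at 1; rewrite <- pow_inv, <- Rpow_mult_distr.
  apply Rmult_le_compat.
  - apply pow_le. apply Rdiv_le_0_compat; nra.
  - left; apply exp_pos.
  - apply pow_incr. split. apply Rdiv_le_0_compat; nra.
    apply (Rmult_le_reg_r (r^2 - r*R0*cos phi + R0^2/4)); [lra|]. rewrite Rmult_assoc, Rinv_l by lra. lra.
  - apply exp_le_3 || idtac.
    left; apply exp_increasing. pose proof PI_RGT_0.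
    assert (R0 * (3/4) < r * cos phi) by nra.
    assert (R0^2/2 < r^2 - (r^2 - r*R0*cos phi + R0^2/4)) by nra.
    assert (PI * (R0^2/2) < PI * (r^2 - (r^2 - r*R0*cos phi + R0^2/4))) by (apply Rmult_lt_compat_l; lra).
    lra.
Qed.
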